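(* Let $M$ be a free $\mathbb{T}$-module with a finite $\mathbb{T}$-basis, $V$ its associated complex vector space, and $(\cdot,\cdot)$ a bicomplex scalar product on $M$ which is hyperbolic positive and closed on $V$. Let $|\phi\rangle\in M$ and $|\psi\rangle\in V$. Then for $k=1,2$, $$\langle\phi_{\mathbf{e_k}}|(|\psi\rangle)=\langle\phi_{\mathbf{e_k}}|\psi\rangle,$$ where the left side is the functional $\langle\phi_{\mathbf{e_k}}|:|\chi\rangle\mapsto P_k(\langle\phi|\chi\rangle)$ evaluated at $|\psi\rangle$, and the right side is the scalar product $(|\phi_{\mathbf{e_k}}\rangle,|\psi\rangle)$ of the ket $|\phi_{\mathbf{e_k}}\rangle:=P_k(|\phi\rangle)\in V$ with $|\psi\rangle$.
   Context: Bicomplex numbers: $\mathbb{T}=\{z_1+z_2\mathbf{i_2}: z_1,z_2\in\mathbb{C}(\mathbf{i_1})\}$, $\mathbb{C}(\mathbf{i_1})=\{x+y\mathbf{i_1}: x,y\in\mathbb{R}\}$, $\mathbf{i_1}^2=\mathbf{i_2}^2=-1$, $\mathbf{i_1}\mathbf{i_2}=\mathbf{i_2}\mathbf{i_1}=\mathbf{j}$, $\mathbf{j}^2=1$ (commutative). Hyperbolic numbers $\mathbb{D}=\{x+y\mathbf{j}:x,y\in\mathbb{R}\}$. Idempotents $\mathbf{e_1}=(1+\mathbf{j})/2$, $\mathbf{e_2}=(1-\mathbf{j})/2$. Every $w=z_1+z_2\mathbf{i_2}$ is uniquely $w=(z_1-z_2\mathbf{i_1})\mathbf{e_1}+(z_1+z_2\mathbf{i_1})\mathbf{e_2}$;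 $P_1(w)=z_1-z_2\mathbf{i_1}$, $P_2(w)=z_1+z_2\mathbf{i_1}$. Conjugation: $(z_1+z_2\mathbf{i_2})^{\dagger_3}=\overline{z_1}-\overline{z_2}\mathbf{i_2}$. $\mathbb{D}^+=\{a\mathbf{e_1}+b\mathbf{e_2}: a,b\ge 0\}$. $M$ has $\mathbb{T}$-basis $\{|m_1\rangle,\dots,|m_n\rangle\}$, $V=\{\sum x_l|m_l\rangle: x_l\in\mathbb{C}(\mathbf{i_1})\}$; for $|\phi\rangle=\sum x_l|m_l\rangle$ with $x_l=x_{1l}\mathbf{e_1}+x_{2l}\mathbf{e_2}$, $x_{kl}\in\mathbb{C}(\mathbf{i_1})$, set $P_k(|\phi\rangle)=\sum_l x_{kl}|m_l\rangle\in V$. A bicomplex scalar product is a map $(\cdot,\cdot):M\times M\to\mathbb{T}$, additive in the second argument, with $(|\phi\rangle,\alpha|\psi\rangle)=\alpha(|\phi\rangle,|\psi\rangle)$ for $\alpha\in\mathbb{T}$, $(|\phi\rangle,|\psi\rangle)=(|\psi\rangle,|\phi\rangle)^{\dagger_3}$, $(|\phi\rangle,|\phi\rangle)=0\iff|\phi\rangle=0$; hyperbolic positive: $(|\phi\rangle,|\phi\rangle)\in\mathbb{D}^+$; closed on $V$: $(|\phi\rangle,|\psi\rangle)\in\mathbb{C}(\mathbf{i_1})$ for $|\phi\rangle,|\psi\rangle\in V$. The bra $\langle\phi|$ is the functional $|\psi\rangle\mapsto\langle\phi|\psi\rangle:=(|\phi\rangle,|\psi\rangle)$. *)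

(* Defs.v *)
(* real numbers = an arbitrary realType R (the reals),
   C(i1) = R[i] (mathcomp-real-closed complex numbers, 'i%C = i1). *)
From HB Require Import structures.
From mathcomp Require Import all_boot all_algebra.
From mathcomp Require Import reals.
From mathcomp Require Export complex.
Set Implicit Arguments. Unset Strict Implicit. Unset Printing Implicit Defensive.
Import GRing.Theory Num.Theory.
Local Open Scope ring_scope.

Section Bicomplex.
Variable R : realType.
Local Notation C := R[i].

(* A bicomplex number z1 + z2 i2 with z1, z2 in C(i1). *)
Record bicomplex := BC { bz1 : C; bz2 : C }.

Definition bc0 : bicomplex := BC 0 0.
Definition bc_add (w v : bicomplex) := BC (bz1 w + bz1 v) (bz2 w + bz2 v).
Definition bc_mul (w v : bicomplex) :=
  BC (bz1 w * bz1 v - bz2 w * bz2 v) (bz1 w * bz2 v + bz2 w * bz1 v).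
Definition bc_of (z : C) : bicomplex := BC z 0.
Definition bc_conj3 (w : bicomplex) := BC (conjc (bz1 w)) (- conjc (bz2 w)).
Definition bcP1 (w : bicomplex) : C := bz1 w - bz2 w * 'i%C.
Definition bcP2 (w : bicomplex) : C := bz1 w + bz2 w * 'i%C.
(* e1 = (1 + j)/2, e2 = (1 - j)/2, with j = i1 i2 *)
Definition bc_j : bicomplex := BC 0 'i%C.
Definition bc_e1 : bicomplex := BC (2^-1) ('i%C / 2).
Definition bc_e2 : bicomplex := BC (2^-1) (- ('i%C / 2)).
Definition in_Dplus (w : bicomplex) : Prop :=
  exists a b : R, 0 <= a /\ 0 <= b /\
    w = bc_add (bc_mul (bc_of (a%:C)%C) bc_e1) (bc_mul (bc_of (b%:C)%C) bc_e2).

(* The free T-module M with T-basis |m_1>,...,|m_n> is represented by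
   its coordinate module T^n : a ket is the function l |-> its coordinate. *)
Definition ket (n : nat) := 'I_n -> bicomplex.
Definition ket0 n : ket n := fun _ => bc0.
Definition ket_add n (f g : ket n) : ket n := fun l => bc_add (f l) (g l).
Definition ket_scale n (a : bicomplex) (f : ket n) : ket n :=
  fun l => bc_mul a (f l).
Definition in_V n (f : ket n) : Prop := forall l, bz2 (f l) = 0.
Definition ketP1 n (f : ket n) : ket n := fun l => bc_of (bcP1 (f l)).
Definition ketP2 n (f : ket n) : ket n := fun l => bc_of (bcP2 (f l)).

Definition bicomplex_scalar_product n (sp : ket n -> ket n -> bicomplex) : Prop :=
  [/\ (forall phi psi chi, sp phi (ket_add psi chi) = bc_add (sp phi psi) (sp phi chi)),
      (forall phi psi (a : bicomplex), sp phi (ket_scale a psi) = bc_mul a (sp phi psi)),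
      (forall phi psi, sp phi psi = bc_conj3 (sp psi phi)) &
      (forall phi, sp phi phi = bc0 <-> phi = @ket0 n)].

Definition hyperbolic_positive n (sp : ket n -> ket n -> bicomplex) : Prop :=
  forall phi, in_Dplus (sp phi phi).

Definition closed_on_V n (sp : ket n -> ket n -> bicomplex) : Prop :=
  forall phi psi, in_V phi -> in_V psi -> bz2 (sp phi psi) = 0.

Definition bra_e1 n (sp : ket n -> ket n -> bicomplex) (phi : ket n) : ket n -> C :=
  fun chi => bcP1 (sp phi chi).
Definition bra_e2 n (sp : ket n -> ket n -> bicomplex) (phi : ket n) : ket n -> C :=
  fun chi => bcP2 (sp phi chi).

End Bicomplex.

(* Main.v *)
Require Import Defs.
From HB Require Import structures.
From mathcomp Require Import all_boot all_algebra.
From mathcomp Require Import reals complex ring.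
From Stdlib Require Import FunctionalExtensionality.
Import GRing.Theory Num.Theory.
Local Open Scope ring_scope.

Section S.
Variable R : realType.
Local Notation C := R[i].

Lemma bc_ext (a b : bicomplex R) : bz1 a = bz1 b -> bz2 a = bz2 b -> a = b.
Proof. by case: a; case: b => /= ? ? ? ? -> ->. Qed.

Lemma conj_i : ('i%C : C)^*%C = - 'i%C.
Proof. by apply/eqP; rewrite eq_complex /= oppr0 !eqxx. Qed.

Lemma conj3_mul (a b : bicomplex R) : bc_conj3 (bc_mul a b) = bc_mul (bc_conj3 a) (bc_conj3 b).
Proof. by case: a => a1 a2; case: b => b1 b2; apply: bc_ext => /=;
  rewrite ?rmorphB ?rmorphD ?rmorphM /=; ring. Qed.

Lemma conj3_add (a b : bicomplex R) : bc_conj3 (bc_add a b) = bc_add (bc_conj3 a) (bc_conj3 b).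
Proof. by case: a => a1 a2; case: b => b1 b2; apply: bc_ext => /=;
  rewrite ?rmorphD /=; ring. Qed.

Lemma conj3K (a : bicomplex R) : bc_conj3 (bc_conj3 a) = a.
Proof. by case: a => a1 a2; apply: bc_ext => /=; rewrite ?rmorphN /= conjcK ?opprK. Qed.

Lemma conj_half : ((2 : C)^-1)^*%C = 2^-1.
Proof. by rewrite conjc_inv conjc_nat. Qed.

Lemma conjM (a b : C) : ((a*b)^*)%C = (a^* * b^*)%C.
Proof. exact: rmorphM. Qed.
Lemma conjN (a : C) : ((- a)^*)%C = (- a^*)%C.
Proof. exact: rmorphN. Qed.

Lemma conj_ihalf : (('i%C / 2 : C)^*)%C = - ('i%C/2).
Proof. rewrite conjM.
have -> : (('i%C : C)^* * (2^-1)^*)%C = - 'i%C * 2^-1.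
  by congr (_ * _); [exact: conj_i | exact: conj_half].
by rewrite mulNr. Qed.

Lemma conj3_e1 : bc_conj3 (bc_e1 R) = bc_e1 R.
Proof. apply: bc_ext; first exact: conj_half.
change (- (('i%C / 2 : C)^*)%C = 'i%C/2). by rewrite conj_ihalf opprK. Qed.

Lemma conj3_e2 : bc_conj3 (bc_e2 R) = bc_e2 R.
Proof. apply: bc_ext; first exact: conj_half.
change (- ((- ('i%C / 2)) : C)^*%C = - ('i%C/2)). by rewrite conjN opprK; exact: conj_ihalf. Qed.


Lemma two_neq0 : (2 : C) != 0.
Proof. by rewrite pnatr_eq0. Qed.

Lemma idem_sub (c x y : C) : x - y = c * ('i%C ^+ 2 + 1) -> x = y.
Proof. by rewrite sqr_i addNr mulr0 => /eqP; rewrite subr_eq0 => /eqP. Qed.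

Lemma L1 (z1 z2 : C) : z1 =
  2^-1 * (z1 - z2 * 'i%C) - 'i%C / 2 * 0 +
  (2^-1 * (z1 + z2 * 'i%C) - - ('i%C / 2) * 0).
Proof. have h := two_neq0. field. done. Qed.

Lemma L2 (z1 z2 : C) : z2 =
 2^-1 * 0 + 'i%C / 2 * (z1 - z2 * 'i%C) +
 (2^-1 * 0 + - ('i%C / 2) * (z1 + z2 * 'i%C)).
Proof. apply: (idem_sub z2). have h := two_neq0. field. done. Qed.

Lemma L3 (a b : C) :
  (2^-1 * a - 'i%C / 2 * 0 + (2^-1 * b - - ('i%C / 2) * 0)) -
  (2^-1 * 0 + 'i%C / 2 * a + (2^-1 * 0 + - ('i%C / 2) * b)) * 'i%C = a.
Proof. apply: (idem_sub (- (a - b) / 2)). have h := two_neq0. field. done. Qed.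

Lemma L4 (a b : C) :
  (2^-1 * a - 'i%C / 2 * 0 + (2^-1 * b - - ('i%C / 2) * 0)) +
  (2^-1 * 0 + 'i%C / 2 * a + (2^-1 * 0 + - ('i%C / 2) * b)) * 'i%C = b.
Proof. apply: (idem_sub ((a - b) / 2)). have h := two_neq0. field. done. Qed.

Lemma decomp n (phi : ket R n) :
  phi = ket_add (ket_scale (bc_e1 R) (ketP1 phi)) (ket_scale (bc_e2 R) (ketP2 phi)).
Proof.
apply: functional_extensionality => l.
rewrite /ket_add /ket_scale /ketP1 /ketP2.
apply: bc_ext; cbn [bz1 bz2 bc_add bc_mul bc_e1 bc_e2 bc_of bcP1 bcP2];
  case: (phi l) => z1 z2; cbn [bz1 bz2 bcP1 bcP2]; [exact: L1 | exact: L2].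
Qed.

End S.

Theorem mainTheorem17 (R : realType) (n : nat)
    (sp : ket R n -> ket R n -> bicomplex R)
    (Hsp : bicomplex_scalar_product sp)
    (Hpos : hyperbolic_positive sp)
    (Hclosed : closed_on_V sp)
    (phi psi : ket R n) (Hpsi : in_V psi) :
  bc_of (bra_e1 sp phi psi) = sp (ketP1 phi) psi /\
  bc_of (bra_e2 sp phi psi) = sp (ketP2 phi) psi.
Proof.
case: Hsp => Hadd Hscale Hconj Hdef.
have HV1 : in_V (ketP1 phi) by [].
have HV2 : in_V (ketP2 phi) by [].
have E : sp phi psi = bc_add (bc_mul (bc_e1 R) (sp (ketP1 phi) psi))
                             (bc_mul (bc_e2 R) (sp (ketP2 phi) psi)).
  rewrite Hconj {1}(@decomp R n phi) Hadd !Hscale conj3_add !conj3_mul conj3_e1 conj3_e2.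
  by rewrite -!Hconj.
have z1 := Hclosed _ _ HV1 Hpsi; have z2 := Hclosed _ _ HV2 Hpsi.
rewrite /bra_e1 /bra_e2 E.
move: z1 z2; case: (sp (ketP1 phi) psi) => a a2; case: (sp (ketP2 phi) psi) => b b2.
cbn [bz1 bz2] => -> ->.
have hi := sqr_i R.
idtac.
split; apply: bc_ext => //; cbn [bz1 bz2 bc_add bc_mul bc_e1 bc_e2 bc_of bcP1 bcP2];
  [exact: L3 | exact: L4].
Qed.
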